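(* Let $k\in\mathbb{N}$ and let $G=(g_1,\dots,g_k)\in\mathbb{N}_0^k$ be a telescopic sequence. Then there exists a sequence $G'$ which is both telescopic and minimal and satisfies $\langle G'\rangle=\langle G\rangle$.
   Context: $\mathbb{N}$ denotes the positive integers and $\mathbb{N}_0=\mathbb{N}\cup\{0\}$. For a finite sequence $G=(g_1,\dots,g_k)\in\mathbb{N}_0^k$ (repeats and zeros allowed), $\langle G\rangle$ denotes the set of all $\mathbb{N}_0$-linear combinations of $g_1,\dots,g_k$. $G$ is minimal if $\langle G''\rangle\ne\langle G\rangle$ for every proper subsequence $G''$ of $G$. For $1\le i\le k$ let $G_i=(g_1,\dots,g_i)$ and $d_i=\gcd(G_i)$. A sequence is called admissible if $g_1>0$ when $k=1$ and $g_1+g_2>0$ when $k\ge 2$ (so all $d_i>0$). For admissible $G$, define $c(G)=(c_2,\dots,c_k)$ with $c_j=d_{j-1}/d_j$. An admissible $G$ is telescopic if $c_jg_j\in\langle G_{j-1}\rangle$ for all $2\le j\le k$ (no requirement that $\gcd(G)=1$ or that $G$ be increasing). *)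

(* Defs.v *)
(* Sequences G = (g_1,...,g_k) are represented as [seq nat],
   with g_j = nth 0 G j.-1 (1-indexed as in the paper). *)
From mathcomp Require Import all_boot.
Set Implicit Arguments. Unset Strict Implicit. Unset Printing Implicit Defensive.

Definition in_sg (G : seq nat) (x : nat) : Prop :=
  exists c : seq nat, size c = size G /\
    x = \sum_(i < size G) nth 0 c i * nth 0 G i.

Definition same_sg (G1 G2 : seq nat) : Prop := forall x, in_sg G1 x <-> in_sg G2 x.

Definition minimal (G : seq nat) : Prop :=
  forall m : bitseq, size m = size G -> false \in m -> ~ same_sg (mask m G) G.

Definition admissible (G : seq nat) : Prop :=
  (size G = 1 -> 0 < nth 0 G 0) /\ (2 <= size G -> 0 < nth 0 G 0 + nth 0 G 1).

Definition dseq (G : seq nat) (i : nat) : nat := foldr gcdn 0 (take i G).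

Definition cseq (G : seq nat) (j : nat) : nat := dseq G j.-1 %/ dseq G j.

Definition telescopic (G : seq nat) : Prop :=
  admissible G /\
  forall j, 2 <= j <= size G -> in_sg (take j.-1 G) (cseq G j * nth 0 G j.-1).

(* Main.v *)
Require Import Defs.
From mathcomp Require Import all_boot.
From mathcomp Require Import zify.
From Stdlib Require Import Classical.
Set Implicit Arguments. Unset Strict Implicit.

Fixpoint sgm (L : seq nat) (x : nat) : Prop :=
  match L with
  | [::] => x = 0
  | a :: L' => exists n y, x = n * a + y /\ sgm L' y
  end.

Lemma in_sg_sgm L x : in_sg L x <-> sgm L x.
Proof.
elim: L x => [|a L IH] x /=.
  split; first by case=> c [_ ->]; rewrite big_ord0.
  by move=> ->; exists [::]; rewrite big_ord0.
split.
  case=> c [hs ->]; rewrite big_ord_recl /=.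
  exists (nth 0 c 0), (\sum_(i < size L) nth 0 c (bump 0 i) * nth 0 L i); split => //.
  apply/IH; exists (behead c); split; first by rewrite size_behead hs.
  by apply: eq_bigr => i _; rewrite nth_behead.
case=> n [y [-> /IH [c [hs ->]]]].
exists (n :: c); split; first by rewrite /= hs.
by rewrite big_ord_recl.
Qed.

Lemma sgm0 L : sgm L 0.
Proof. elim: L => [|a L IH] //=; by exists 0, 0. Qed.

Lemma sgmD L x y : sgm L x -> sgm L y -> sgm L (x + y).
Proof.
elim: L x y => [|a L IH] x y /=; first by move=> -> ->.
case=> n [x' [-> hx]] [m [y' [-> hy]]].
exists (n + m), (x' + y'); split; last exact: IH.
rewrite mulnDl; lia.
Qed.

Lemma sgmM L n x : sgm L x -> sgm L (n * x).
Proof.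
move=> hx; elim: n => [|n IH]; first by rewrite mul0n; exact: sgm0.
by rewrite mulSn; apply: sgmD.
Qed.

Lemma sgm_mem L a : a \in L -> sgm L a.
Proof.
elim: L => [|b L IH] //=; rewrite in_cons => /orP [/eqP ->|h].
  by exists 1, 0; split; [lia| exact: sgm0].
by exists 0, a; split => //; exact: IH.
Qed.

Lemma sgm_sub L1 L2 : (forall a, a \in L1 -> sgm L2 a) ->
  forall x, sgm L1 x -> sgm L2 x.
Proof.
elim: L1 => [|a L IH] hs x /=; first by move=> ->; exact: sgm0.
case=> n [y [-> hy]]; apply: sgmD.
  by apply: sgmM; apply: hs; rewrite mem_head.
by apply: IH => // b hb; apply: hs; rewrite in_cons hb orbT.
Qed.

Lemma sgm_cat L1 L2 x : sgm (L1 ++ L2) x <->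
  exists y z, x = y + z /\ sgm L1 y /\ sgm L2 z.
Proof.
split.
  elim: L1 x => [|a L IH] x /=; first by move=> h; exists 0, x; split => //.
  case=> n [y [-> /IH [y1 [z [-> [h1 h2]]]]]].
  exists (n * a + y1), z; split; first lia.
  by split => //; exists n, y1.
case=> y [z [-> [h1 h2]]]; apply: sgmD.
  by apply: (sgm_sub _ h1) => a ha; apply: sgm_mem; rewrite mem_cat ha.
by apply: (sgm_sub _ h2) => a ha; apply: sgm_mem; rewrite mem_cat ha orbT.
Qed.

Lemma sgm1 g x : sgm [:: g] x <-> exists n, x = n * g.
Proof.
split => /=; first by case=> n [y [-> ->]]; exists n; lia.
by case=> n ->; exists n, 0; split => //; lia.
Qed.

Lemma sgm_dvd L d : (forall a, a \in L -> d %| a) -> forall x, sgm L x -> d %| x.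
Proof.
move=> h x hx; have : sgm [:: d] x.
  apply: (sgm_sub _ hx) => a /h /dvdnP [k ->]; apply/sgm1; by exists k.
by case/sgm1 => n ->; apply: dvdn_mull.
Qed.

Lemma dvd_foldr L d : d %| foldr gcdn 0 L <-> (forall a, a \in L -> d %| a).
Proof.
elim: L => [|b L IH] /=; first by split => // _; rewrite dvdn0.
rewrite dvdn_gcd; split.
  case/andP => h1 /IH h2 a; rewrite in_cons => /orP [/eqP ->|] //; exact: h2.
move=> h; apply/andP; split; first by apply: h; rewrite mem_head.
by apply/IH => a ha; apply: h; rewrite in_cons ha orbT.
Qed.

Lemma foldr_dvd L a : a \in L -> foldr gcdn 0 L %| a.
Proof. move=> ha; by move: (dvdnn (foldr gcdn 0 L)) => /dvd_foldr; apply. Qed.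

Lemma foldr_sg L x : sgm L x -> foldr gcdn 0 L %| x.
Proof. apply: sgm_dvd; exact: foldr_dvd. Qed.

Lemma foldr_same L1 L2 : (forall x, sgm L1 x <-> sgm L2 x) ->
  foldr gcdn 0 L1 = foldr gcdn 0 L2.
Proof.
move=> h; apply/eqP; rewrite eqn_dvd; apply/andP; split; apply/dvd_foldr => a ha.
  by apply: foldr_sg; apply/h; apply: sgm_mem.
by apply: foldr_sg; apply/h; apply: sgm_mem.
Qed.

Lemma foldr_gcd_cat P Q : foldr gcdn 0 (P ++ Q) = gcdn (foldr gcdn 0 P) (foldr gcdn 0 Q).
Proof. elim: P => [|a P IH] /=; first by rewrite gcd0n. by rewrite IH gcdnA. Qed.

Definition SM (L : seq nat) := uniq L /\ forall x, x \in L -> ~ sgm [seq y <- L | y != x] x.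

Lemma mask_notin (L : seq nat) (m : bitseq) p : uniq L -> size m = size L -> p < size L ->
  nth true m p = false -> nth 0 L p \notin mask m L.
Proof.
elim: L m p => [|a L IH] [|b m] p //= /andP [ha hu] [hs] hp.
case: p hp => [|p] hp /=.
  move=> -> /=; apply/negP => /mem_mask; by apply/negP.
move=> hb; have hp' : p < size L by [].
have := IH m p hu hs hp' hb.
case: b {hb} => //=; rewrite in_cons negb_or => -> ; rewrite andbT.
apply/negP => /eqP he; move: ha; by rewrite -he mem_nth.
Qed.

Lemma SM_minimal L : SM L -> minimal L.
Proof.
case=> hu hSM m hs hf hsame.
set p := index false m.
have hp : p < size L by rewrite -hs index_mem.
have hn : nth true m p = false by rewrite nth_index.
have hx := mask_notin hu hs hp hn.
set x := nth 0 L p in hx.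
have xL : x \in L by apply: mem_nth.
apply: (hSM x xL).
have : sgm (mask m L) x by apply/in_sg_sgm; apply/hsame; apply/in_sg_sgm; apply: sgm_mem.
apply: sgm_sub => a ha; apply: sgm_mem.
rewrite mem_filter (mem_mask ha) andbT.
by apply/negP => /eqP he; move: hx; rewrite -he ha.
Qed.

Lemma sgm_perm L x : x \in L -> forall y, sgm L y <-> sgm (x :: [seq z <- L | z != x]) y.
Proof.
move=> hx y; split; apply: sgm_sub => a ha; apply: sgm_mem.
  by rewrite in_cons mem_filter ha andbT; case: (a == x).
by move: ha; rewrite in_cons mem_filter => /orP [/eqP ->|/andP [_ ->]].
Qed.

Lemma atom L x u v : SM L -> x \in L -> x = u + v -> sgm L u -> sgm L v -> u = 0 \/ v = 0.
Proof.
move=> [hu hSM] hx he /(sgm_perm hx) [al [u' [hu' hu'']]] /(sgm_perm hx) [be [v' [hv' hv'']]].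
case: al hu' => [|al] hu'.
  case: be hv' => [|be] hv'.
    exfalso; apply: (hSM x hx); have E : x = u' + v' by lia. rewrite [X in sgm _ X]E; exact: sgmD.
  left; have : x <= v by rewrite hv'; rewrite mulSn; lia.
  lia.
right; have : x <= u by rewrite hu'; rewrite mulSn; lia.
lia.
Qed.

Lemma SM_pos L : SM L -> 0 \notin L.
Proof. case=> _ h; apply/negP => h0; apply: (h 0 h0); exact: sgm0. Qed.

Lemma div_c D g c n : 0 < D -> c * gcdn D g = D -> D %| n * g -> c %| n.
Proof.
move=> hD hc hdv.
set t := gcdn D g in hc.
have ht : 0 < t by rewrite gcdn_gt0 hD.
have hg : g = g %/ t * t by rewrite divnK // dvdn_gcdr.
set g' := g %/ t in hg.
have cop : coprime c g'.
  apply/eqP; apply/eqP; rewrite -(eqn_pmul2r ht) mul1n muln_gcdl hc -hg; by [].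
move: hdv; rewrite -hc hg mulnA dvdn_pmul2r // Gauss_dvdl //.
Qed.

Lemma core H g c x b n : SM H -> 0 < foldr gcdn 0 H ->
  c * gcdn (foldr gcdn 0 H) g = foldr gcdn 0 H -> sgm H (c * g) ->
  x \in H -> x = b + n * g -> sgm [seq y <- H | y != x] b -> x = c * g.
Proof.
set D := foldr gcdn 0 H => hSM hD hc hcg hx he hb.
have hbT : sgm H b by apply: (sgm_sub _ hb) => a; rewrite mem_filter => /andP [_ ha]; exact: sgm_mem.
have hng : n * g <> 0.
  move=> h0; apply: (hSM.2 x hx); rewrite [X in sgm _ X]he h0 addn0; exact: hb.
have : D %| n * g.
  have h1 : D %| x by apply: foldr_dvd.
  have h2 : D %| b by apply: foldr_sg.
  by move: h1; rewrite he dvdn_addr.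
move/(div_c hD hc) => /dvdnP [q hq].
case: q hq => [|q] hq; first by exfalso; apply: hng; rewrite hq.
have E : x = (b + q * (c * g)) + c * g by rewrite he hq; lia.
case: (atom hSM hx E _ hcg) => [| h0|h0].
- apply: sgmD => //; exact: sgmM.
- by rewrite E h0.
- by exfalso; apply: hng; rewrite hq; move: h0; lia.
Qed.

Lemma gcd_key E A A2 c g : 0 < gcdn (gcdn E (gcdn (c * g) A)) A2 ->
  c * gcdn (gcdn (gcdn E (gcdn (c * g) A)) A2) g = gcdn (gcdn E (gcdn (c * g) A)) A2 ->
  gcdn E (gcdn (c * g) A) = c * gcdn E (gcdn g A).
Proof.
set X := gcdn E (gcdn (c * g) A); set D := gcdn X A2; set Y := gcdn E (gcdn g A).
move=> hD hc.
have XE : X %| E by exact: dvdn_gcdl.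
have Xcg : X %| c * g by apply: dvdn_trans (dvdn_gcdr _ _) (dvdn_gcdl _ _).
have XA : X %| A by apply: dvdn_trans (dvdn_gcdr _ _) (dvdn_gcdr _ _).
have YE : Y %| E by exact: dvdn_gcdl.
have Yg : Y %| g by apply: dvdn_trans (dvdn_gcdr _ _) (dvdn_gcdl _ _).
have YA : Y %| A by apply: dvdn_trans (dvdn_gcdr _ _) (dvdn_gcdr _ _).
have hYX : gcdn X g = Y.
  apply/eqP; rewrite eqn_dvd; apply/andP; split.
    rewrite !dvdn_gcd; apply/and3P; split.
    - by apply: dvdn_trans (dvdn_gcdl _ _) XE.
    - exact: dvdn_gcdr.
    - by apply: dvdn_trans (dvdn_gcdl _ _) XA.
  rewrite !dvdn_gcd Yg andbT YE YA /= andbT.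
  by apply: dvdn_mull.
apply/eqP; rewrite eqn_dvd; apply/andP; split.
  rewrite /Y !muln_gcdr !dvdn_gcd; apply/and3P; split.
  - by apply: dvdn_mull; exact: dvdn_gcdl.
  - by apply: dvdn_trans (dvdn_gcdr _ _) (dvdn_gcdl _ _).
  - by apply: dvdn_mull; apply: dvdn_trans (dvdn_gcdr _ _) (dvdn_gcdr _ _).
rewrite -hYX.
set t := gcdn D g in hc.
have ht : 0 < t by rewrite gcdn_gt0 hD.
have hg : g = g %/ t * t by rewrite divnK // dvdn_gcdr.
set g' := g %/ t in hg.
have cop : coprime g' c.
  rewrite coprime_sym; apply/eqP; apply/eqP; rewrite -(eqn_pmul2r ht) mul1n muln_gcdl hc -hg; by [].
have /dvdnP [s hs] : D %| X by exact: dvdn_gcdl.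
rewrite hs -hc hg mulnA -muln_gcdl gcdnC Gauss_gcdl //.
have -> : s * c * t = c * (s * t) by lia.
apply: dvdn_mul => //; apply: dvdn_mul => //; exact: dvdn_gcdr.
Qed.

Definition cond (L : seq nat) i := sgm (take i L) (dseq L i %/ dseq L i.+1 * nth 0 L i).
Definition WT L := forall i, 0 < i < size L -> cond L i.

Lemma tele_iff L : telescopic L <-> admissible L /\ WT L.
Proof.
rewrite /telescopic /WT /cond /cseq; split; case=> ha h; split => //.
  move=> i /andP [h1 h2]; apply/in_sg_sgm; apply: (h i.+1); by apply/andP.
move=> [|[|j]] // /andP [_ hj]; apply/in_sg_sgm; exact: h.
Qed.

Lemma cond_cat P Q i : i < size P -> (cond (P ++ Q) i <-> cond P i).
Proof.
move=> hi; rewrite /cond /dseq !takel_cat ?nth_cat ?hi //; exact: ltnW.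
Qed.

Lemma WT_cat P Q : WT (P ++ Q) -> WT P.
Proof.
move=> h i /andP [h1 h2]; apply/(cond_cat Q h2); apply: h.
by rewrite h1 size_cat (leq_trans h2) // leq_addr.
Qed.

Lemma take_mid P (x : nat) R l : take (size P + l.+1) (P ++ x :: R) = P ++ x :: take l R.
Proof. by rewrite take_cat ltnNge leq_addr /= addKn. Qed.

Lemma dseq_mid P (x : nat) R l : dseq (P ++ x :: R) (size P + l.+1) =
  gcdn (foldr gcdn 0 P) (gcdn x (foldr gcdn 0 (take l R))).
Proof. by rewrite /dseq take_mid foldr_gcd_cat. Qed.

Lemma dseq_P P (Q : seq nat) : dseq (P ++ Q) (size P) = foldr gcdn 0 P.
Proof. by rewrite /dseq take_size_cat. Qed.

Lemma WT_app H g : WT H -> sgm H (foldr gcdn 0 H %/ gcdn (foldr gcdn 0 H) g * g) ->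
  WT (H ++ [:: g]).
Proof.
move=> hW hc i /andP [h1 h2]; move: h2; rewrite size_cat addn1 ltnS leq_eqVlt => /orP [/eqP ->|hi].
  rewrite /cond dseq_P take_size_cat // nth_cat ltnn subnn /=.
  have E1 := dseq_mid H g [::] 0; rewrite addn1 /= gcdn0 in E1; by rewrite E1.
apply/cond_cat => //; apply: hW; by rewrite h1.
Qed.

Lemma XY P R c g l : let E := foldr gcdn 0 P in
  let D := foldr gcdn 0 (P ++ c * g :: R) in
  0 < D -> c * gcdn D g = D ->
  gcdn E (gcdn (c * g) (foldr gcdn 0 (take l R))) =
  c * gcdn E (gcdn g (foldr gcdn 0 (take l R))).
Proof.
move=> E D hD hc; apply: (@gcd_key _ _ (foldr gcdn 0 (drop l R))).
  suff <- : D = gcdn (gcdn E (gcdn (c * g) (foldr gcdn 0 (take l R)))) (foldr gcdn 0 (drop l R)) by [].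
  by rewrite /D foldr_gcd_cat /= -{1}(cat_take_drop l R) foldr_gcd_cat !gcdnA.
suff <- : D = gcdn (gcdn E (gcdn (c * g) (foldr gcdn 0 (take l R)))) (foldr gcdn 0 (drop l R)) by [].
by rewrite /D foldr_gcd_cat /= -{1}(cat_take_drop l R) foldr_gcd_cat !gcdnA.
Qed.

Lemma nth_mid P (x : nat) R l : nth 0 (P ++ x :: R) (size P + l.+1) = nth 0 R l.
Proof. by rewrite nth_cat ltnNge leq_addr /= addKn. Qed.

Lemma WT_repl P R c g : 0 < c -> 0 < g ->
  0 < foldr gcdn 0 (P ++ c * g :: R) ->
  c * gcdn (foldr gcdn 0 (P ++ c * g :: R)) g = foldr gcdn 0 (P ++ c * g :: R) ->
  WT (P ++ c * g :: R) -> WT (P ++ g :: R).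
Proof.
move=> hc hg hD hcD hW i /andP [h1 h2].
have hs : size (P ++ g :: R) = size (P ++ c * g :: R) by rewrite !size_cat.
case: (ltngtP i (size P)) => hi.
- apply/cond_cat => //; apply/(cond_cat _ hi); apply: hW; by rewrite h1 -hs.
- have [l El] : exists l, i = size P + l.+1 by exists (i - size P - 1); lia.
  subst i.
  have := hW (size P + l.+1); rewrite h1 -hs h2 => /(_ isT).
  rewrite /cond !take_mid -addnS !dseq_mid !nth_mid.
  rewrite (XY l hD hcD) (XY l.+1 hD hcD) divnMl //.
  apply: sgm_sub => a; rewrite mem_cat in_cons => /or3P [ha|/eqP ->|ha].
  + by apply: sgm_mem; rewrite mem_cat ha.
  + by apply: sgmM; apply: sgm_mem; rewrite mem_cat mem_head orbT.
  + by apply: sgm_mem; rewrite mem_cat in_cons ha !orbT.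
- have := hW (size P); rewrite -hi h1 -hs h2 => /(_ isT).
  rewrite hi /cond !take_size_cat // !dseq_P.
  have E0 := dseq_mid P (c * g) R 0; have E1 := dseq_mid P g R 0.
  rewrite addn1 take0 /= gcdn0 in E0 E1; rewrite E0 E1.
  rewrite !nth_cat ltnn subnn /=.
  have := XY 0 hD hcD; rewrite take0 /= !gcdn0 => ->.
  set E := foldr gcdn 0 P; set Y := gcdn E g.
  have hY : 0 < Y by rewrite gcdn_gt0 hg orbT.
  have hcY : c * Y %| E.
    have := XY 0 hD hcD; rewrite take0 /= !gcdn0 => <-; exact: dvdn_gcdl.
  move: hcY => /dvdnP [q ->].
  have -> : q * (c * Y) %/ (c * Y) = q by apply: mulnK; rewrite muln_gt0 hc.
  have -> : q * (c * Y) %/ Y = q * c by rewrite mulnA; apply: mulnK.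
  by rewrite mulnA.
Qed.

Lemma same_of L1 L2 : (forall a, a \in L1 -> sgm L2 a) -> (forall a, a \in L2 -> sgm L1 a) ->
  forall x, sgm L1 x <-> sgm L2 x.
Proof. by move=> h1 h2 x; split; apply: sgm_sub. Qed.

Lemma adm_mid P (g : nat) R : 0 < g -> (2 <= size P -> 0 < nth 0 P 0 + nth 0 P 1) ->
  admissible (P ++ g :: R).
Proof.
move=> hg; case: P => [|a [|b P]] /= h; rewrite /admissible /=; split => //; try lia.
Qed.

Lemma step_core H g c x L : SM H -> 0 < foldr gcdn 0 H ->
  c * gcdn (foldr gcdn 0 H) g = foldr gcdn 0 H -> sgm H (c * g) -> x \in H ->
  (forall a, a \in L -> (a \in H) && (a != x) \/ a = g) -> sgm L x -> x = c * g.
Proof.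
move=> hSM hD hc hcg hx hL hLx.
have : sgm ([seq y <- H | y != x] ++ [:: g]) x.
  apply: (sgm_sub _ hLx) => a /hL [/andP [h1 h2]|->]; apply: sgm_mem; rewrite mem_cat.
    by rewrite mem_filter h1 h2.
  by rewrite mem_head orbT.
case/sgm_cat => y [z [E [hy /sgm1 [n hz]]]].
apply: (core hSM hD hc hcg hx _ hy); by rewrite E hz.
Qed.

Lemma uniq_mid P (x : nat) R : uniq (P ++ x :: R) = (x \notin P ++ R) && uniq (P ++ R).
Proof. by rewrite -cat1s uniq_catCA cat1s cons_uniq. Qed.

Lemma mem_mid P (x y : nat) R : (y \in P ++ x :: R) = (y == x) || (y \in P ++ R).
Proof. by rewrite !mem_cat in_cons orbCA. Qed.

Lemma main_ind n : forall G, size G = n -> WT G -> (exists x, sgm G x /\ x <> 0) ->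
  exists H, telescopic H /\ SM H /\ (forall x, sgm H x <-> sgm G x).
Proof.
elim: n => [|n IH] G.
  by move=> /size0nil -> _ [x [/= ->]].
case/lastP: G => [//|G0 g]; rewrite size_rcons => [[hs]] hW [x0 [hx0 hx0']].
move: hW hx0; rewrite -cats1 => hW hx0.
have hsame0 : forall H, (forall x, sgm H x <-> sgm G0 x) -> sgm H g ->
    forall x, sgm H x <-> sgm (G0 ++ [:: g]) x.
  move=> H hH hg; apply: same_of => a ha.
    apply: (sgm_sub (L1 := G0)); last by apply/hH; exact: sgm_mem.
    by move=> b hb; apply: sgm_mem; rewrite mem_cat hb.
  move: ha; rewrite mem_cat => /orP [ha|]; first by apply/hH; exact: sgm_mem.
  by rewrite inE => /eqP ->.
case: (classic (exists x, sgm G0 x /\ x <> 0)) => hG0; last first.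
  have z0 : forall y, sgm G0 y -> y = 0.
    move=> y hy; apply: NNPP => hy0; apply: hG0; by exists y.
  have hg : 0 < g.
    case/sgm_cat: hx0 => y [z [E [/z0 hy /sgm1 [m hz]]]].
    rewrite lt0n; apply/eqP => g0; apply: hx0'; by rewrite E hy hz g0 muln0.
  exists [:: g]; split; [|split].
  - by apply/tele_iff; split; [rewrite /admissible /= |move=> [|i] /andP [] ].
  - split => //= x; rewrite inE => /eqP -> /=; rewrite eqxx /=; lia.
  - apply: same_of => a.
      by rewrite inE => /eqP ->; apply: sgm_mem; rewrite mem_cat mem_head orbT.
    rewrite mem_cat => /orP [/sgm_mem /z0 ->|]; first exact: sgm0.
    by move=> ha; apply: sgm_mem.
have [H [hT [hSM hH]]] := IH G0 hs (WT_cat hW) hG0.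
set D := foldr gcdn 0 H.
have hD0 : D = foldr gcdn 0 G0 by apply: foldr_same.
have hDp : 0 < D.
  case: hG0 => y [hy hy0]; have := foldr_sg (proj2 (hH y) hy).
  rewrite -/D lt0n; case: eqP => // ->; rewrite dvd0n => /eqP; done.
have hcond : sgm G0 (D %/ gcdn D g * g).
  have := hW (size G0); rewrite size_cat /= addn1 ltnSn andbT.
  have -> : 0 < size G0 by case: hG0 => y [hy hy0]; case: (G0) hy => // /= ->.
  move=> /(_ isT); rewrite /cond take_size_cat // dseq_P -hD0 nth_cat ltnn subnn /=.
  have E1 := dseq_mid G0 g [::] 0; rewrite addn1 /= gcdn0 in E1; rewrite E1 -hD0.
  done.
set c := D %/ gcdn D g.
have hc : c * gcdn D g = D by rewrite divnK // dvdn_gcdl.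
have hcp : 0 < c by rewrite lt0n; apply/eqP => c0; move: hc hDp; rewrite c0 mul0n => <-.
have hcg : sgm H (c * g) by apply: (proj2 (hH _)).
case: (classic (sgm H g)) => hgH.
  by exists H; split; [|split] => //; apply: hsame0.
have hgp : 0 < g by rewrite lt0n; apply/eqP => g0; apply: hgH; rewrite g0; exact: sgm0.
have gnH : g \notin H by apply/negP => /sgm_mem.
case hcgH : (c * g \in H).
  move: hc hDp; rewrite /D => hc hDp.
  case/splitPr: hcgH hSM hT hH hcg hc hDp gnH hgH => P R hSM hT hH hcg hc hDp gnH hgH.
  exists (P ++ g :: R); split; [|split].
  - case/tele_iff: hT => ha hWH; apply/tele_iff; split.
      apply: adm_mid => // h2; have := ha.2; rewrite size_cat /= !nth_cat.
      have h0 : 0 < size P by exact: ltnW.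
      rewrite h0 h2; apply; exact: leq_trans h2 (leq_addr _ _).
    exact: (WT_repl hcp hgp hDp hc hWH).
  - case: (hSM) => hu hS; split.
      move: hu; rewrite !uniq_mid => /andP [_ ->]; rewrite andbT.
      by apply/negP => hin; move: gnH; rewrite mem_mid hin orbT.
    move=> x; rewrite mem_mid => /orP [/eqP ->|hx].
      move=> hg; apply: hgH; apply: (sgm_sub _ hg) => a.
      rewrite mem_filter mem_mid => /andP [/negbTE -> /= ha]; apply: sgm_mem.
      by rewrite mem_mid ha orbT.
    have hxH : x \in P ++ c * g :: R by rewrite mem_mid hx orbT.
    move=> hL; have := step_core hSM hDp hc hcg hxH _ hL.
    have hxg : x != c * g.
      apply/negP => /eqP hxe; move: hu; rewrite uniq_mid -hxe hx; done.
    move=> h; move: hxg; rewrite h ?eqxx //.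
    move=> a; rewrite mem_filter mem_mid => /andP [hax /orP [/eqP ->|ha]]; first by right.
    by left; rewrite mem_mid ha orbT hax.
  - apply: same_of => a.
      rewrite mem_mid => /orP [/eqP ->|ha]; first by apply: sgm_mem; rewrite mem_cat mem_head orbT.
      have : sgm G0 a by apply/hH; apply: sgm_mem; rewrite mem_mid ha orbT.
      by apply: sgm_sub => b hb; apply: sgm_mem; rewrite mem_cat hb.
    rewrite mem_cat => /orP [ha|]; last by rewrite inE => /eqP ->; apply: sgm_mem; rewrite mem_mid eqxx.
    have : sgm (P ++ c * g :: R) a by apply/hH; exact: sgm_mem.
    apply: sgm_sub => b; rewrite mem_mid => /orP [/eqP ->|hb].
      by apply: sgmM; apply: sgm_mem; rewrite mem_mid eqxx.
    by apply: sgm_mem; rewrite mem_mid hb orbT.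
have hSM' := hSM; case: hSM' => hu hS.
exists (H ++ g :: [::]); split; [|split].
- case/tele_iff: hT => ha hWH; apply/tele_iff; split.
    by apply: adm_mid => //; case: ha.
  exact: WT_app.
- split.
    by rewrite uniq_mid cats0 hu andbT.
  move=> x; rewrite mem_mid cats0 => /orP [/eqP ->|hx].
    move=> hg; apply: hgH; apply: (sgm_sub _ hg) => a.
    rewrite mem_filter mem_mid cats0 => /andP [/negbTE -> /= ha]; exact: sgm_mem.
  move=> hL.
  have hsub : forall a, a \in [seq y <- H ++ [:: g] | y != x] -> (a \in H) && (a != x) \/ a = g.
    move=> a; rewrite mem_filter mem_mid cats0 => /andP [hax /orP [/eqP ->|ha]]; first by right.
    by left; rewrite ha hax.
  have h := step_core hSM hDp hc hcg hx hsub hL.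
  have hin : c * g \in H by rewrite -h.
  by rewrite hcgH in hin.
- apply: same_of => a.
    rewrite mem_mid cats0 => /orP [/eqP ->|ha]; first by apply: sgm_mem; rewrite mem_cat mem_head orbT.
    have : sgm G0 a by apply/hH; apply: sgm_mem.
    by apply: sgm_sub => b hb; apply: sgm_mem; rewrite mem_cat hb.
  rewrite mem_cat => /orP [ha|]; last by rewrite inE => /eqP ->; apply: sgm_mem; rewrite mem_mid eqxx.
  have : sgm H a by apply/hH; exact: sgm_mem.
  by apply: sgm_sub => b hb; apply: sgm_mem; rewrite mem_mid cats0 hb orbT.
Qed.
Unset Implicit Arguments.

Theorem mainTheorem1 (G : seq nat) (hk : 1 <= size G) (hG : telescopic G) :
  exists G' : seq nat, telescopic G' /\ minimal G' /\ same_sg G' G.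
Proof.
have [ha hW] := proj1 (tele_iff G) hG.
have hnz : exists x, sgm G x /\ x <> 0.
  case: ha => h1 h2.
  have m0 : sgm G (nth 0 G 0) by apply: sgm_mem; exact: mem_nth.
  move: hk; rewrite leq_eqVlt => /orP [/eqP hs|hs].
    exists (nth 0 G 0); split => //; have := h1 (esym hs); lia.
  have m1 : sgm G (nth 0 G 1) by apply: sgm_mem; exact: mem_nth.
  exists (nth 0 G 0 + nth 0 G 1); split; first exact: sgmD.
  have := h2 hs; lia.
have [H [hT [hSM hH]]] := main_ind (erefl (size G)) hW hnz.
exists H; split => //; split; first exact: SM_minimal.
by move=> x; rewrite !in_sg_sgm.
Qed.
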